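(* Let $p\ge5$ be a prime. Then \[ \sum_{j=0}^{p-3}B_j\equiv-1\pmod p . \]
   Context: $B_j$ is the $j$th Bernoulli number ($\frac{t}{e^t-1}=\sum_{m\ge0}B_m\frac{t^m}{m!}$). For rationals whose denominators are coprime to $p$, $a\equiv b\pmod p$ means $a-b$ is $p$ times a rational with denominator coprime to $p$. *)

(* Defs.v *)
From mathcomp Require Import all_boot all_order all_algebra.
Set Implicit Arguments. Unset Strict Implicit. Unset Printing Implicit Defensive.
Import Order.TTheory GRing.Theory Num.Theory.
Local Open Scope ring_scope.

(* Bernoulli numbers with t/(e^t-1) convention (B_1 = -1/2), defined by the
   recurrence equivalent to the coefficientwise generating-function identity
   sum_{k=0}^{m} binom(m+1,k) B_k = [m = 0]:
   B_0 = 1,  B_m = -1/(m+1) * sum_{k<m} binom(m+1,k) B_k. *)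
Fixpoint bernoulli_seq (n : nat) : seq rat :=
  match n with
  | 0 => [:: 1]
  | n'.+1 =>
      let s := bernoulli_seq n' in
      rcons s (- (n'.+2)%:R^-1 * \sum_(k < n'.+1) ('C(n'.+2, k))%:R * nth 0 s k)
  end.

Definition bernoulli (n : nat) : rat := nth 0 (bernoulli_seq n) n.

Definition ratcong (p : nat) (a b : rat) : Prop :=
  exists r : rat, a - b = p%:R * r /\ coprime `|denq r|%N p.

(* Main.v *)
Require Import Defs.
From mathcomp Require Import all_boot all_order all_algebra.
From mathcomp Require Import ring lra zify.
Import Order.TTheory GRing.Theory Num.Theory.
Local Open Scope ring_scope.

Lemma bseq_size n : size (bernoulli_seq n) = n.+1.
Proof. by elim: n => //= n IH; rewrite size_rcons IH. Qed.

Lemma bseq_nth n k : (k <= n)%N -> nth 0 (bernoulli_seq n) k = bernoulli k.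
Proof.
elim: n k => [|n IH] k hk; first by move: hk; rewrite leqn0 => /eqP ->.
case: (ltngtP k n.+1) hk => // [hlt _|-> _]; last by [].
rewrite /= nth_rcons bseq_size hlt; exact: IH.
Qed.

Lemma brec n : bernoulli n.+1 =
  - (n.+2)%:R^-1 * \sum_(k < n.+1) ('C(n.+2, k))%:R * bernoulli k.
Proof.
rewrite {1}/bernoulli /= nth_rcons bseq_size ltnn; case: eqP => // _.
congr (_ * _); apply: eq_bigr => i _; rewrite bseq_nth //; exact: ltnSE (ltn_ord i).
Qed.

Lemma brel n : \sum_(k < n.+2) ('C(n.+2, k))%:R * bernoulli k = 0.
Proof.
rewrite big_ord_recr /= brec binSn.
set s := \sum_(_ < _) _.
have h : (n.+2)%:R != 0 :> rat by rewrite pnatr_eq0.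
by rewrite mulrA mulrN mulfV // mulN1r addrN.
Qed.

Lemma brel' N : \sum_(k < N) ('C(N, k))%:R * bernoulli k = (N == 1%N)%:R.
Proof.
case: N => [|[|n]]; first by rewrite big_ord0.
  by rewrite big_ord1 /= /bernoulli /= mul1r.
by rewrite brel.
Qed.

Lemma sum_delta M (F : nat -> rat) i :
  \sum_(k < M) F k * (k == i :> nat)%:R = if (i < M)%N then F i else 0.
Proof.
case: ifP => hi.
  rewrite (bigD1 (Ordinal hi)) // /=. rewrite eqxx mulr1 big1 ?addr0 // => j hj.
  have : (j != i :> nat) by apply: contra hj => /eqP h; apply/eqP/val_inj.
  by move/negbTE => ->; rewrite mulr0.
rewrite big1 // => j _; case: eqP => [hj|]; last by rewrite mulr0.
by move: (ltn_ord j); rewrite hj hi.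
Qed.

Lemma binmul N k j : (j <= k)%N -> (k <= N)%N ->
  ('C(N,k) * 'C(k,j) = 'C(N,j) * 'C(N-j,k-j))%N.
Proof.
move=> hjk hkN.
have e1 := bin_fact hjk.
have e2 := bin_fact hkN.
have hjN : (j <= N)%N by apply: leq_trans hkN.
have e4 := bin_fact hjN.
have h3 : (k - j <= N - j)%N by apply: leq_sub2r.
have e3 := bin_fact h3.
have e5 : (N - j - (k - j) = N - k)%N by lia.
rewrite e5 in e3.
apply/eqP; rewrite -(eqn_pmul2r (_ : 0 < j`! * (k-j)`! * (N-k)`!)%N); last first.
  by rewrite !muln_gt0 !fact_gt0.
have -> : ('C(N, k) * 'C(k, j) * (j`! * (k - j)`! * (N - k)`!) =
   'C(N, k) * ('C(k, j) * (j`! * (k - j)`!)) * (N - k)`!)%N by ring.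
have -> : ('C(N, j) * 'C(N - j, k - j) * (j`! * (k - j)`! * (N - k)`!) =
   'C(N, j) * (j`! * ('C(N - j, k - j) * ((k - j)`! * (N - k)`!))))%N by ring.
by rewrite e1 e3 e4 -mulnA e2.
Qed.

Lemma inner N j : (j <= N)%N ->
  \sum_(0 <= k < N.+1) (-1)^+(N-k) * ('C(N,k))%:R * ('C(k,j))%:R
   = ('C(N,j))%:R * (j == N)%:R :> rat.
Proof.
move=> hjN.
rewrite (big_cat_nat (_ : (0 <= j)%N) (_ : (j <= N.+1)%N)) //=; last by apply: leq_trans hjN _.
rewrite big_nat_cond big1 ?add0r; last first.
  move=> k /andP[/andP[_ hk] _]; by rewrite (bin_small hk) mulr0.
rewrite -{1}(add0n j) big_addn.
rewrite (eq_big_nat _ _ (F2 := fun i => ('C(N,j))%:R *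
   ((-1)^+(N-j-i) * ('C(N-j,i))%:R))); last first.
  move=> i /andP[_ hi].
  have hij : (i + j <= N)%N by lia.
  rewrite -mulrA -natrM binmul //; last by apply: leq_addl.
  rewrite addnK natrM mulrCA; congr (_ * (_ * _)).
  by congr (_ ^+ _); lia.
rewrite -big_distrr /=; congr (_ * _).
have -> : (N.+1 - j = (N - j).+1)%N by lia.
rewrite big_mkord.
have := exprDn (-1 : rat) 1 (N - j).
rewrite addNr expr0n => h.
rewrite (_ : (j == N) = ((N - j)%N == 0%N)); last first.
  by apply/idP/idP => /eqP h'; apply/eqP; lia.
rewrite h; apply: eq_bigr => i _; by rewrite expr1n mulr1 mulr_natr.
Qed.

Lemma inversion (x : nat -> rat) N :
  \sum_(0 <= k < N.+1) (-1)^+(N-k) * ('C(N,k))%:R *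
     (\sum_(0 <= j < k.+1) ('C(k,j))%:R * x j) = x N.
Proof.
have widen k : (k < N.+1)%N -> \sum_(0 <= j < k.+1) ('C(k,j))%:R * x j
    = \sum_(0 <= j < N.+1) ('C(k,j))%:R * x j.
  move=> hk; rewrite (big_nat_widen _ _ _ _ _ hk) big_mkcond /=.
  apply: eq_bigr => j _; case: ifP => // /negbT; rewrite -leqNgt => h.
  by rewrite bin_small // mulr0n mul0r.
rewrite (eq_big_nat _ _ (F2 := fun k => \sum_(0 <= j < N.+1)
    (-1)^+(N-k) * ('C(N,k))%:R * ('C(k,j))%:R * x j)); last first.
  move=> k /andP[_ hk]; rewrite widen // big_distrr /=.
  by apply: eq_bigr => j _; rewrite mulrA.
rewrite exchange_big /=.
rewrite (eq_big_nat _ _ (F2 := fun j => x j * (('C(N,j))%:R * (j == N)%:R))); last first.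
  move=> j /andP[_ hj]; rewrite -inner // big_distrr /=.
  by apply: eq_bigr => k _; rewrite mulrC.
rewrite big_nat_recr //= eqxx binn mul1r mulr1 big_nat_cond big1 ?add0r //.
move=> j /andP[/andP[_ hj] _]; rewrite (_ : (j == N) = false) ?mulr0 //.
by apply/negbTE; rewrite neq_ltn hj.
Qed.

Lemma sign_sub N k : (k <= N)%N -> (-1)^+(N-k) = (-1)^+N * (-1)^+k :> rat.
Proof.
move=> h.
have e : (-1)^+k * (-1)^+k = 1 :> rat.
  by rewrite -exprD addnn -mul2n exprM sqrrN !expr1n.
by rewrite -{2}(subnK h) exprD -mulrA e mulr1.
Qed.

Lemma sign_sq N : (-1)^+N * (-1)^+N = 1 :> rat.
Proof. by rewrite -exprD addnn -mul2n exprM sqrrN !expr1n. Qed.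

Lemma a_form k : \sum_(0 <= j < k.+1) ('C(k,j))%:R * bernoulli j
   = bernoulli k + (k == 1%N)%:R.
Proof. by rewrite big_mkord big_ord_recr /= brel' binn mul1r addrC. Qed.

Lemma drel N : (0 < N)%N ->
  \sum_(k < N) ('C(N,k))%:R * ((-1)^+k * bernoulli k) = N%:R.
Proof.
move=> hN.
have H := inversion bernoulli N.
rewrite (eq_big_nat _ _ (F2 := fun k => (-1)^+N * (('C(N,k))%:R * ((-1)^+k * bernoulli k)
    + ('C(N,k))%:R * (-1)^+k * (k == 1%N)%:R))) in H; last first.
  move=> k /andP[_ hk]; rewrite a_form sign_sub //; ring.
rewrite -big_distrr /= big_split /= !big_mkord (sum_delta N.+1 (fun k => ('C(N,k))%:R * (-1)^+k) 1) in H.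
rewrite ltnS hN bin1 expr1 in H.
have H2 : \sum_(k < N.+1) ('C(N,k))%:R * ((-1)^+k * bernoulli k)
   = (-1)^+N * bernoulli N + N%:R.
  rewrite -H mulrA sign_sq mul1r; ring.
move: H2; rewrite big_ord_recr /= binn mul1r => H2.
by apply: (addIr ((-1)^+N * bernoulli N)); rewrite H2 addrC.
Qed.

Lemma bprel n : \sum_(k < n.+1) ('C(n.+1,k))%:R * (bernoulli k + (k == 1%N :> nat)%:R)
   = n.+1%:R.
Proof.
under eq_bigr do rewrite mulrDr.
rewrite big_split /= brel' (sum_delta n.+1 (fun k => ('C(n.+1,k))%:R) 1).
case: n => [|n] /=; first by rewrite addr0.
by rewrite add0r bin1.
Qed.

Lemma oddness n : (-1)^+n * bernoulli n = bernoulli n + (n == 1%N :> nat)%:R.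
Proof.
elim/ltn_ind: n => n IH.
have h1 := drel n.+1 (ltn0Sn n).
have h2 := bprel n.
rewrite big_ord_recr /= in h1; rewrite big_ord_recr /= in h2.
rewrite (eq_bigr (fun k : 'I_n => ('C(n.+1,k))%:R * (bernoulli k + (k == 1%N :> nat)%:R))) in h1;
  last first.
  by move=> k _; rewrite IH.
rewrite -h2 in h1; move/addrI: h1; rewrite binSn => /mulfI; apply.
by rewrite pnatr_eq0.
Qed.

Lemma bern_odd n : odd n -> n != 1%N -> bernoulli n = 0.
Proof.
move=> ho hn1; have := oddness n.
rewrite -signr_odd ho expr1 (negbTE hn1) addr0 => h.
lra.
Qed.

Definition pint (p : nat) (r : rat) :=
  exists (z : int) (d : nat), coprime d p /\ r = z%:~R / d%:R.

Section PInt.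
Variable p : nat.
Hypothesis hp1 : (1 < p)%N.

Lemma cop_pos d : coprime d p -> (0 < d)%N.
Proof.
case: d => //; rewrite /coprime gcd0n => /eqP h; move: hp1; by rewrite h.
Qed.

Lemma cop_neq0 d : coprime d p -> d%:R != 0 :> rat.
Proof. by move/cop_pos; rewrite pnatr_eq0 -lt0n. Qed.

Lemma intr_natE (k : nat) : (k%:Z)%:~R = k%:R :> rat.
Proof. by []. Qed.

Lemma pint_int (z : int) : pint p z%:~R.
Proof. by exists z, 1%N; rewrite coprime1n divr1. Qed.

Lemma pint_nat (k : nat) : pint p k%:R.
Proof. by have := pint_int k%:Z; rewrite intr_natE. Qed.

Lemma pintD a b : pint p a -> pint p b -> pint p (a + b).
Proof.
move=> [z1 [d1 [c1 ->]]] [z2 [d2 [c2 ->]]].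
exists (z1 * d2%:Z + z2 * d1%:Z), (d1 * d2)%N; split; first by rewrite coprimeMl c1 c2.
have h1 := cop_neq0 _ c1; have h2 := cop_neq0 _ c2.
rewrite natrM rmorphD !rmorphM /= !intr_natE; field.
by rewrite h1 h2.
Qed.

Lemma pintM a b : pint p a -> pint p b -> pint p (a * b).
Proof.
move=> [z1 [d1 [c1 ->]]] [z2 [d2 [c2 ->]]].
exists (z1 * z2), (d1 * d2)%N; split; first by rewrite coprimeMl c1 c2.
have h1 := cop_neq0 _ c1; have h2 := cop_neq0 _ c2.
rewrite natrM rmorphM /=; field.
by rewrite h1 h2.
Qed.

Lemma pintN a : pint p a -> pint p (- a).
Proof.
move=> [z [d [c ->]]]; exists (- z), d; split => //.
by rewrite rmorphN mulNr.
Qed.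

Lemma pint_inv n : coprime n p -> pint p (n%:R^-1).
Proof. by move=> c; exists 1, n; split => //; rewrite mul1r. Qed.

Lemma pint_sum m (F : 'I_m -> rat) : (forall i, pint p (F i)) ->
  pint p (\sum_(i < m) F i).
Proof.
move=> h; apply: (big_ind (pint p)) => //; first by have := pint_nat 0.
exact: pintD.
Qed.

Lemma pint_den r : pint p r -> coprime `|denq r| p.
Proof.
move=> [z [d [c er]]].
have hd := cop_neq0 _ c.
have e : (numq r * d%:Z)%:~R = (z * denq r)%:~R :> rat.
  rewrite !rmorphM /= numqE er intr_natE; field; exact: hd.
move/intr_inj: e => e.
have : (`|denq r| %| `|numq r| * d)%N.
  have := congr1 absz e; rewrite !abszM /= => ->.
  by rewrite dvdn_mull.
rewrite Gauss_dvdr; last by rewrite coprime_sym coprime_num_den.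
by move=> hdv; apply: coprime_dvdl hdv c.
Qed.

End PInt.

Lemma bin_cong p k : prime p -> (k < p)%N ->
  exists z : int, ('C(p.-1, k))%:R - (-1)^+k = p%:R * z%:~R :> rat.
Proof.
move=> hp; elim: k => [_|k IH hk].
  by exists 0; rewrite bin0 expr0 subrr mulr0.
have [z hz] := IH (ltnW hk).
have hp0 : (0 < p)%N by apply: prime_gt0.
have hd : (p %| 'C(p, k.+1))%N by apply: prime_dvd_bin => //; rewrite hk.
case/dvdnP: hd => m hm.
have e : 'C(p.-1, k.+1) = ('C(p, k.+1) - 'C(p.-1, k))%N.
  by rewrite -{2}(prednK hp0) binS addnK.
have le : ('C(p.-1, k) <= 'C(p, k.+1))%N.
  by rewrite -{2}(prednK hp0) binS leq_addl.
exists (m%:Z - z).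
rewrite e natrB // hm natrM exprS.
have : ('C(p.-1, k))%:R = (-1)^+k + p%:R * z%:~R :> rat by rewrite -hz; ring.
move=> ->; rewrite rmorphB /= intr_natE; ring.
Qed.

Lemma bern_pint p k : prime p -> (k.+2 <= p)%N -> pint p (bernoulli k).
Proof.
move=> hp; have hp1 := prime_gt1 hp.
elim/ltn_ind: k => [[|m]] IH hk.
  by have := pint_nat p 1; rewrite /bernoulli /=.
rewrite brec; apply: pintM => //.
  apply: pintN => //; apply: pint_inv => //.
  rewrite coprime_sym prime_coprime // gtnNdvd //.
apply: pint_sum => // i; apply: pintM => //; first exact: pint_nat.
apply: IH; first exact: ltn_ord i.
by apply: leq_trans hk; rewrite !ltnS ltnW.
Qed.

Theorem corollary4 (p : nat) (hp : prime p) (hp5 : (5 <= p)%N) :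
  ratcong p (\sum_(0 <= j < p - 2) bernoulli j) (-1).
Proof.
have hp1 := prime_gt1 hp.
have [n en] : exists n, p = n.+3 by exists (p - 3)%N; lia.
have hodd : odd p by case: (even_prime hp) => // h; lia.
have e2 : (p - 2 = n.+1)%N by lia.
have e1 : (p.-1 = n.+2)%N by lia.
have hB : bernoulli n.+1 = 0.
  apply: bern_odd; last by apply/eqP; lia.
  by move: hodd; rewrite en /= negbK.
have H0 := brel n.
rewrite big_ord_recr /= hB mulr0 addr0 in H0.
have hp0 : p%:R != 0 :> rat by rewrite pnatr_eq0; lia.
set r := - \sum_(k < n.+1) ((('C(p.-1,k))%:R - (-1)^+k) / p%:R) * bernoulli k.
exists r; split.
  rewrite /r mulrN mulr_sumr e2 big_mkord.
  have -> : \sum_(i < n.+1) p%:R * ((('C(p.-1,i))%:R - (-1)^+i) / p%:R * bernoulli i)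
     = \sum_(i < n.+1) (('C(n.+2,i))%:R - (-1)^+i) * bernoulli i.
    by apply: eq_bigr => i _; rewrite e1; field.
  have -> : \sum_(i < n.+1) (('C(n.+2,i))%:R - (-1)^+i) * bernoulli i
     = \sum_(i < n.+1) ('C(n.+2,i))%:R * bernoulli i
       - \sum_(i < n.+1) (bernoulli i + (i == 1%N :> nat)%:R).
    rewrite -sumrB; apply: eq_bigr => i _; by rewrite mulrBl oddness.
  have hd : \sum_(i < n.+1) (i == 1%N :> nat)%:R = 1 :> rat.
    have h := sum_delta n.+1 (fun _ => 1) 1.
    have h1 : (1 < n.+1)%N by lia.
    rewrite h1 in h; apply: etrans h; apply: eq_bigr => i _; by rewrite mul1r.
  by rewrite H0 sub0r opprK big_split /= hd opprK.
apply: (@pint_den p hp1); rewrite /r; apply: pintN => //.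
apply: pint_sum => // k; apply: pintM => //.
  have hk : (k < p)%N by have := ltn_ord k; lia.
  have [z hz] := @bin_cong p k hp hk.
  rewrite hz mulrC mulrA mulVf // mul1r; exact: pint_int.
apply: bern_pint => //; have := ltn_ord k; lia.
Qed.
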